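(* Let $A/B$ and $A'/B'$ be ring extensions, and suppose there are Morita modules ${}_AM_{A'}$ and ${}_BN_{B'}$ with ${}_AA\otimes_BN_{B'}\cong {}_AM_{B'}$. Let $N^{*}=\mathrm{Hom}^r({}_BN,{}_BB)$ and identify $A'$ and $B'$ with the rings $N^{*}\otimes_BA\otimes_BN$ and $N^{*}\otimes_BB\otimes_BN$ as described in the context. Let $S$ be an $A$-$A$-bimodule and $S'=N^{*}\otimes_BS\otimes_BN$, an $A'$-$A'$-bimodule via $(\rho\otimes x\otimes u)(\sigma\otimes s\otimes v)=\rho\otimes x\,u^\sigma s\otimes v$ and $(\sigma\otimes s\otimes v)(\rho\otimes x\otimes u)=\sigma\otimes s\,v^\rho x\otimes u$. Then the map $D\mapsto 1\otimes D\otimes 1$ (i.e. $\rho\otimes x\otimes u\mapsto \rho\otimes D(x)\otimes u$) is an additive group isomorphism $\mathrm{Der}_B(A,S)\cong\mathrm{Der}_{B'}(A',S')$.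
   Context: All rings have identity, subrings contain the identity, and modules are unital. A ring extension $A/B$ means $B$ is a subring of $A$. For modules ${}_AM$, ${}_AN$, $\mathrm{Hom}^r({}_AM,{}_AN)$ denotes left $A$-homomorphisms written on the right of their arguments (the image of $u$ under $\rho$ is written $u^\rho$), and $\mathrm{End}^r({}_AM)=\mathrm{Hom}^r({}_AM,{}_AM)$. For bimodules ${}_AX_{A'}$, ${}_AY_{A'}$, write $X\mid Y$ if $X$ is isomorphic to a direct summand of a finite direct sum of copies of $Y$, and $X\sim Y$ if $X\mid Y$ and $Y\mid X$. A bimodule ${}_AM_{A'}$ is a Morita module if ${}_AM\sim{}_AA$ and $\mathrm{End}^r({}_AM)=A'$. $N^{*}$ is a $B'$-$B$-bimodule via $u^{(b'\rho b)}=(ub')^\rho b$. Since ${}_BN\sim{}_BB$ there are finitely many $f_j\in N^{*}$, $m_j\in N$ with $\sum_j n^{f_j}m_j=n$ for all $n\in N$. Identification: the map $N^{*}\otimes_BA\otimes_BN\to\mathrm{End}^r({}_AA\otimes_BN)\cong A'$, $\rho\otimes x\otimes u\mapsto[y\otimes v\mapsto y\,v^\rho x\otimes u]$, is a ring isomorphism when $N^{*}\otimes_BA\otimes_BN$ carries the multiplication $(\rho\otimes x\otimes u)(\sigma\otimes y\otimes v)=\rho\otimes x\,u^\sigma y\otimes v$ (identity $\sum_j f_j\otimes 1\otimes m_j$), and it carries $N^{*}\otimes_BB\otimes_BN$ onto $B'$. For an $A$-$A$-bimodule $S$, a $B$-derivation $D:A\to S$ is an additive map with $D(xy)=D(x)y+xD(y)$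 and $D(b)=0$ for all $b\in B$; $\mathrm{Der}_B(A,S)$ is the group of these. *)

(* Defs.v *)
From mathcomp Require Import all_boot all_algebra.
Set Implicit Arguments.
Unset Strict Implicit.
Unset Printing Implicit Defensive.
Import GRing.Theory.
Local Open Scope ring_scope.

Definition lin (R : pzRingType) (U V : lmodType R) (f : U -> V) : Prop :=
  forall (r : R) (x y : U), f (r *: x + y) = r *: f x + f y.

(* U | V : U is (isomorphic to) a direct summand of a finite direct sum V^n,
   as left R-modules. *)
Definition summand (R : pzRingType) (U V : lmodType R) : Prop :=
  exists (n : nat) (f : U -> {ffun 'I_n -> V}) (g : {ffun 'I_n -> V} -> U),
    [/\ lin f, lin g & forall x, g (f x) = x].

Definition mod_sim (R : pzRingType) (U V : lmodType R) : Prop :=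
  summand U V /\ summand V U.

(* rho : N -> B is an element of N^* = Hom^r(_B N, _B B) (u^rho = rho u). *)
Definition dualf (B : pzRingType) (N : lmodType B) (rho : N -> B) : Prop :=
  forall (b : B) (x y : N), rho (b *: x + y) = b * rho x + rho y.

Definition additive_fun (G H : zmodType) (g : G -> H) : Prop :=
  forall x y, g (x + y) = g x + g y.

Definition biadditive (G H K : zmodType) (m : G -> H -> K) : Prop :=
  (forall x1 x2 y, m (x1 + x2) y = m x1 y + m x2 y) /\
  (forall x y1 y2, m x (y1 + y2) = m x y1 + m x y2).

Definition bimod (R : pzRingType) (X : zmodType)
    (l : R -> X -> X) (r : X -> R -> X) : Prop :=
  [/\ forall a b x, l (a + b) x = l a x + l b x,
      forall a x y, l a (x + y) = l a x + l a y,
      forall x, l 1 x = x &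
      forall a b x, l (a * b) x = l a (l b x)] /\
  [/\ forall x a b, r x (a + b) = r x a + r x b,
      forall x y a, r (x + y) a = r x a + r y a,
      forall x, r x 1 = x &
      forall x a b, r x (a * b) = r (r x a) b] /\
  (forall a x b, l a (r x b) = r (l a x) b).

(* f : N^* x X x N -> G is additive in each variable and B-balanced, where
   N^* is a right B-module via u^(rho b) = u^rho b and X is a B-B-bimodule. *)
Definition balanced3 (B : pzRingType) (N : lmodType B) (X : zmodType)
    (lX : B -> X -> X) (rX : X -> B -> X) (G : zmodType)
    (f : (N -> B) -> X -> N -> G) : Prop :=
  [/\ forall rho1 rho2 x u, dualf rho1 -> dualf rho2 ->
        f (fun n => rho1 n + rho2 n) x u = f rho1 x u + f rho2 x u,
      forall rho x1 x2 u, dualf rho -> f rho (x1 + x2) u = f rho x1 u + f rho x2 u,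
      forall rho x u1 u2, dualf rho -> f rho x (u1 + u2) = f rho x u1 + f rho x u2,
      forall rho b x u, dualf rho -> f (fun n => rho n * b) x u = f rho (lX b x) u &
      forall rho x b u, dualf rho -> f rho (rX x b) u = f rho x (b *: u)].

(* (T, t) is the tensor product N^* (x)_B X (x)_B N, characterised by its
   universal property; t rho x u stands for rho (x) x (x) u. *)
Definition is_tensor3 (B : pzRingType) (N : lmodType B) (X : zmodType)
    (lX : B -> X -> X) (rX : X -> B -> X) (T : zmodType)
    (t : (N -> B) -> X -> N -> T) : Prop :=
  balanced3 lX rX t /\
  forall (G : zmodType) (f : (N -> B) -> X -> N -> G), balanced3 lX rX f ->
    exists g : T -> G,
      [/\ additive_fun g,
          forall rho x u, dualf rho -> g (t rho x u) = f rho x u &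
          forall g' : T -> G, additive_fun g' ->
            (forall rho x u, dualf rho -> g' (t rho x u) = f rho x u) ->
            forall z, g' z = g z].

Inductive sub_gen (G : zmodType) (P : G -> Prop) : G -> Prop :=
  | sub_gen_in x : P x -> sub_gen P x
  | sub_gen_0 : sub_gen P 0
  | sub_gen_sub x y : sub_gen P x -> sub_gen P y -> sub_gen P (x - y).

Definition is_derivation (R X : zmodType) (mul : R -> R -> R)
    (l : R -> X -> X) (r : X -> R -> X) (C : R -> Prop) (D : R -> X) : Prop :=
  [/\ additive_fun D,
      forall x y, D (mul x y) = r (D x) y + l x (D y) &
      forall c, C c -> D c = 0].

(* Main.v *)
Require Import Defs.
From mathcomp Require Import all_boot all_algebra.
From Stdlib Require Import ClassicalEpsilon.
Set Implicit Arguments.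
Unset Strict Implicit.
Import GRing.Theory.
Local Open Scope ring_scope.

Lemma addf0 (G H : zmodType) (g : G -> H) : additive_fun g -> g 0 = 0.
Proof.
move=> ag; have := ag 0 0; rewrite addr0 => /(congr1 (fun t => t - g 0)).
by rewrite subrr addrK => <-.
Qed.

Lemma addfB (G H : zmodType) (g : G -> H) : additive_fun g ->
  forall x y, g (x - y) = g x - g y.
Proof. by move=> ag x y; rewrite -{2}(subrK y x) ag addrK. Qed.

Lemma addf_sum (G H : zmodType) (g : G -> H) (I : Type) (r : seq I)
  (P : pred I) (F : I -> G) :
  additive_fun g -> g (\sum_(i <- r | P i) F i) = \sum_(i <- r | P i) g (F i).
Proof. by move=> ag; apply: big_morph; [exact: ag | exact: addf0]. Qed.

Lemma tens_zero (B : pzRingType) (N : lmodType B) (X : zmodType) lX rX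
  (T : zmodType) (t : (N -> B) -> X -> N -> T) :
  is_tensor3 lX rX t -> forall (G : zmodType) (h : T -> G), additive_fun h ->
  (forall rho x u, dualf rho -> h (t rho x u) = 0) -> forall z, h z = 0.
Proof.
case=> _ U G h ah h0 z.
have bal0 : balanced3 lX rX (fun (_ : N -> B) (_ : X) (_ : N) => (0 : G)).
  by split=> *; rewrite ?addr0.
have [g [_ _ gU]] := U G _ bal0.
rewrite (gU h ah h0 z).
have e0 : (fun _ : T => (0:G)) z = g z.
  by apply: gU => // ? ?; rewrite addr0.
by rewrite -e0.
Qed.

Lemma tens_eq (B : pzRingType) (N : lmodType B) (X : zmodType) lX rX
  (T : zmodType) (t : (N -> B) -> X -> N -> T) :
  is_tensor3 lX rX t -> forall (G : zmodType) (h1 h2 : T -> G),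
  additive_fun h1 -> additive_fun h2 ->
  (forall rho x u, dualf rho -> h1 (t rho x u) = h2 (t rho x u)) ->
  forall z, h1 z = h2 z.
Proof.
move=> Ht G h1 h2 a1 a2 e z; apply/eqP; rewrite -subr_eq0; apply/eqP.
move: z; apply: (tens_zero Ht (h := fun z => h1 z - h2 z)) => [x y|rho x u r].
- by rewrite a1 a2 opprD addrACA.
- by rewrite e // subrr.
Qed.

Lemma tens_lift (B : pzRingType) (N : lmodType B) (X : zmodType) lX rX
  (T : zmodType) (t : (N -> B) -> X -> N -> T) (G : zmodType)
  (f : (N -> B) -> X -> N -> G) :
  is_tensor3 lX rX t -> balanced3 lX rX f ->
  {g : T -> G | additive_fun g /\ forall rho x u, dualf rho -> g (t rho x u) = f rho x u}.
Proof.
case=> _ U bal; apply: constructive_indefinite_description.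
by have [g [ag gf _]] := U G f bal; exists g.
Qed.

Lemma dualf_add (B : pzRingType) (N : lmodType B) (rho : N -> B) :
  dualf rho -> additive_fun rho.
Proof. by move=> d x y; rewrite -{1}(scale1r x) d mul1r. Qed.

Lemma dualf_scale (B : pzRingType) (N : lmodType B) (rho : N -> B) :
  dualf rho -> forall b x, rho (b *: x) = b * rho x.
Proof. by move=> d b x; rewrite -[b *: x]addr0 d (addf0 (dualf_add d)) addr0. Qed.

Theorem lemma2p6 (A B : pzRingType) (i : {rmorphism B -> A}) (N : lmodType B)
    (S : zmodType) (sl : A -> S -> S) (sr : S -> A -> S)
    (TA TS : zmodType)
    (tA : (N -> B) -> A -> N -> TA) (tS : (N -> B) -> S -> N -> TS)
    (mulA : TA -> TA -> TA) (lS : TA -> TS -> TS) (rS : TS -> TA -> TS) :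
  (forall b1 b2 : B, i b1 = i b2 -> b1 = b2) ->
  mod_sim N (B^o) ->
  bimod sl sr ->
  is_tensor3 (fun b x => i b * x) (fun x b => x * i b) tA ->
  is_tensor3 (fun b s => sl (i b) s) (fun s b => sr s (i b)) tS ->
  biadditive mulA ->
  (forall rho x u sigma y v, dualf rho -> dualf sigma ->
     mulA (tA rho x u) (tA sigma y v) = tA rho (x * i (sigma u) * y) v) ->
  biadditive lS ->
  (forall rho x u sigma s v, dualf rho -> dualf sigma ->
     lS (tA rho x u) (tS sigma s v) = tS rho (sl (x * i (sigma u)) s) v) ->
  biadditive rS ->
  (forall sigma s v rho x u, dualf sigma -> dualf rho ->
     rS (tS sigma s v) (tA rho x u) = tS sigma (sr s (i (rho v) * x)) u) ->
  let DerB := is_derivation *%R sl sr (fun x => exists b, x = i b) in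
  let B' := sub_gen (fun y => exists rho b u, dualf rho /\ y = tA rho (i b) u) in
  let DerB' := is_derivation mulA lS rS B' in
  exists Phi : (A -> S) -> TA -> TS,
    [/\ forall D, DerB D ->
          DerB' (Phi D) /\
          (forall rho x u, dualf rho -> Phi D (tA rho x u) = tS rho (D x) u),
        forall D1 D2, DerB D1 -> DerB D2 ->
          forall z, Phi (fun x => D1 x + D2 x) z = Phi D1 z + Phi D2 z,
        forall D1 D2, DerB D1 -> DerB D2 ->
          (forall z, Phi D1 z = Phi D2 z) -> forall x, D1 x = D2 x &
        forall D', DerB' D' -> exists D, DerB D /\ forall z, Phi D z = D' z].
Proof.
move=> iinj Hsim Hbim HtA HtS HmA HmAE HlS HlSE HrS HrSE DerB B' DerB'.
case: Hbim => [[slA slS sl1 slM] [[srA srS sr1 srM] slr]].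
have slS0 : forall a, sl a 0 = 0.
  by move=> a; apply: (@addf0 _ _ (sl a)) => x y; apply: slS.
have sl0 : forall s, sl 0 s = 0.
  by move=> s; apply: (@addf0 _ _ (fun a => sl a s)) => x y; apply: slA.
have srS0 : forall a, sr 0 a = 0.
  by move=> a; apply: (@addf0 _ _ (fun s => sr s a)) => x y; apply: srS.
have sl_sumA : forall s (I : Type) (r : seq I) (P : pred I) (F : I -> A),
    sl (\sum_(k <- r | P k) F k) s = \sum_(k <- r | P k) sl (F k) s.
  by move=> s I r P F; apply: (big_morph (fun a => sl a s)) => [a b|]; [apply: slA | apply: sl0].
case: (HtA) => [[tAr tAx tAu tAb tAb'] _].
case: (HtS) => [[tSr tSx tSu tSb tSb'] _].
have tS0 : forall r u, dualf r -> tS r 0 u = 0.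
  by move=> r u d; apply: (@addf0 _ _ (fun x => tS r x u)) => x y; apply: tSx.
have tA0 : forall r u, dualf r -> tA r 0 u = 0.
  by move=> r u d; apply: (@addf0 _ _ (fun x => tA r x u)) => x y; apply: tAx.
have tS_sum : forall r u (I : Type) (s : seq I) (P : pred I) (F : I -> S), dualf r ->
    tS r (\sum_(k <- s | P k) F k) u = \sum_(k <- s | P k) tS r (F k) u.
  by move=> r u I s P F d; apply: (big_morph (fun x => tS r x u)) => [a b|]; [apply: tSx | apply: tS0].
have tA_sum : forall r u (I : Type) (s : seq I) (P : pred I) (F : I -> A), dualf r ->
    tA r (\sum_(k <- s | P k) F k) u = \sum_(k <- s | P k) tA r (F k) u.
  by move=> r u I s P F d; apply: (big_morph (fun x => tA r x u)) => [a b|]; [apply: tAx | apply: tA0].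
case: HmA => [mA1 mA2]; case: HlS => [lS1 lS2]; case: HrS => [rS1 rS2].
have rS0 : forall w, rS 0 w = 0.
  by move=> w; apply: (@addf0 _ _ (fun z => rS z w)) => x y; apply: rS1.
have lS0 : forall z, lS z 0 = 0.
  by move=> z; apply: (@addf0 _ _ (lS z)) => x y; apply: lS2.
case: Hsim => _ [n [f [g [lf lg gf]]]].
have gadd : additive_fun g.
  by move=> x y; have := lg 1 x y; rewrite !scale1r.
pose rho (j : 'I_n) (v : N) : B := g [ffun k => if k == j then v else 0].
pose uu (j : 'I_n) : N := f 1 j.
have drho : forall j, dualf (rho j).
  move=> j b x y; rewrite /rho.
  rewrite (_ : [ffun k => if k == j then b *: x + y else 0] =
     b *: [ffun k => if k == j then x else 0] + [ffun k => if k == j then y else 0]).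
    exact: lg.
  by apply/ffunP => k; rewrite !ffunE; case: eqP => _; rewrite ?scaler0 ?addr0.
have sum1 : \sum_j rho j (uu j) = 1.
  rewrite -(gf 1) /rho /uu -(addf_sum _ _ _ gadd); congr g.
  apply/ffunP => k; rewrite sum_ffunE (bigD1 k) //= ffunE eqxx big1 ?addr0 //.
  by move=> j /negbTE; rewrite ffunE eq_sym => ->.
have bal_psi : forall j k, balanced3 (fun b s => sl (i b) s) (fun s b => sr s (i b))
    (fun (t : N -> B) (s : S) (v : N) => sl (i (t (uu j))) (sr s (i (rho k v)))).
  move=> j k; split.
  - by move=> t1 t2 s v _ _ /=; rewrite rmorphD slA.
  - by move=> t s1 s2 v _; rewrite srS slS.
  - by move=> t s v1 v2 _; rewrite (dualf_add (drho k)) rmorphD srA slS.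
  - by move=> t b s v _ /=; rewrite rmorphM slM slr.
  - by move=> t s b v _ /=; rewrite (dualf_scale (drho k)) rmorphM srM.
pose psi j k := sval (tens_lift HtS (bal_psi j k)).
have psiA : forall j k, additive_fun (psi j k).
  by move=> j k; case: (svalP (tens_lift HtS (bal_psi j k))).
have psiE : forall j k t s v, dualf t ->
    psi j k (tS t s v) = sl (i (t (uu j))) (sr s (i (rho k v))).
  by move=> j k; case: (svalP (tens_lift HtS (bal_psi j k))).
have contr : forall s, \sum_j \sum_k psi j k (tS (rho j) s (uu k)) = s.
  move=> s.
  have E1 : forall a, \sum_k sl a (sr s (i (rho k (uu k)))) = sl a s.
    by move=> a; rewrite -(addf_sum _ _ _ (slS a)) -(addf_sum _ _ _ (srA s)) -rmorph_sum sum1 rmorph1 sr1.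
  rewrite (eq_bigr (fun j => sl (i (rho j (uu j))) s)).
    by rewrite -sl_sumA -rmorph_sum sum1 rmorph1 sl1.
  by move=> j _; rewrite -E1; apply: eq_bigr => k _; rewrite psiE.
pose P (D : A -> S) (h : TA -> TS) := additive_fun h /\
   forall r x u, dualf r -> h (tA r x u) = tS r (D x) u.
pose Phi (D : A -> S) : TA -> TS :=
  match excluded_middle_informative (exists h, P D h) with
  | left H => sval (constructive_indefinite_description _ H)
  | right _ => fun _ => 0 end.
have PhiP : forall D, (exists h, P D h) -> P D (Phi D).
  move=> D H; rewrite /Phi; case: excluded_middle_informative => [H'|/(_ H) []].
  exact: (svalP (constructive_indefinite_description _ H')).
have balD : forall D, DerB D -> balanced3 (fun b x => i b * x) (fun x b => x * i b)
    (fun r x u => tS r (D x) u).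
  move=> D [Dadd DM D0].
  have Dib : forall b, D (i b) = 0 by move=> b; apply: D0; exists b.
  split.
  - by move=> r1 r2 x u d1 d2; apply: tSr.
  - by move=> r x1 x2 u d /=; rewrite Dadd tSx.
  - by move=> r x u1 u2 d; apply: tSu.
  - by move=> r b x u d /=; rewrite tSb //= DM Dib srS0 add0r.
  - by move=> r x b u d /=; rewrite -tSb' //= DM Dib slS0 addr0.
have PhiD : forall D, DerB D -> P D (Phi D).
  move=> D HD; apply: PhiP; have [h Hh] := tens_lift HtA (balD D HD); by exists h.
exists Phi; split.
- move=> D HD; have [PA PE] := PhiD D HD; split => //.
  case: (HD) => [Dadd DM D0].
  have Dib : forall b, D (i b) = 0 by move=> b; apply: D0; exists b.
  split => //.
  + move=> z w; move: z.
    apply: (tens_eq HtA (h1 := fun z => Phi D (mulA z w))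
                         (h2 := fun z => rS (Phi D z) w + lS z (Phi D w))).
    * by move=> z1 z2 /=; rewrite mA1 PA.
    * by move=> z1 z2 /=; rewrite PA rS1 lS1 addrACA.
    move=> r x u dr /=; move: w.
    apply: (tens_eq HtA (h1 := fun w => Phi D (mulA (tA r x u) w))
               (h2 := fun w => rS (Phi D (tA r x u)) w + lS (tA r x u) (Phi D w))).
    * by move=> w1 w2 /=; rewrite mA2 PA.
    * by move=> w1 w2 /=; rewrite PA rS2 lS2 addrACA.
    move=> s y v ds /=.
    rewrite HmAE // !PE // HrSE // HlSE // -tSx // DM DM Dib slS0 addr0 srM //.
  + move=> c; rewrite /B' => Hc; elim: Hc => [y [r [b [u [dr ->]]]] | | y1 y2 _ IH1 _ IH2].
    * by rewrite PE // Dib tS0.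
    * exact: addf0 PA.
    * by rewrite (addfB PA) IH1 IH2 subrr.
- move=> D1 D2 H1 H2 z.
  have H12 : DerB (fun x => D1 x + D2 x).
    case: (H1) => [a1 m1 z1]; case: (H2) => [a2 m2 z2]; split.
    + by move=> x y /=; rewrite a1 a2 addrACA.
    + by move=> x y /=; rewrite m1 m2 srS slS addrACA.
    + by move=> c hc /=; rewrite z1 // z2 // addr0.
  have [PA12 PE12] := PhiD _ H12; have [PA1 PE1] := PhiD _ H1; have [PA2 PE2] := PhiD _ H2.
  move: z; apply: (tens_eq HtA (h1 := Phi (fun x => D1 x + D2 x))
                              (h2 := fun z => Phi D1 z + Phi D2 z)) => //.
  + by move=> x y; rewrite PA1 PA2 addrACA.
  + by move=> r x u d; rewrite PE12 // PE1 // PE2 // tSx.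
- move=> D1 D2 H1 H2 E x.
  rewrite -(contr (D1 x)) -(contr (D2 x)).
  apply: eq_bigr => j _; apply: eq_bigr => k _.
  by rewrite -((PhiD _ H1).2 _ _ _ (drho j)) -((PhiD _ H2).2 _ _ _ (drho j)) E.
move=> D' [D'A D'M D'0].
pose D (x : A) : S := \sum_j \sum_k psi j k (D' (tA (rho j) x (uu k))).
have Lsplit : forall s x y v, dualf s ->
    tA s (x * y) v = \sum_l mulA (tA s x (uu l)) (tA (rho l) y v).
  move=> s x y v d.
  rewrite (eq_bigr (fun l => tA s (x * i (rho l (uu l)) * y) v)); last first.
    by move=> l _; rewrite HmAE.
  by rewrite -tA_sum // -mulr_suml -mulr_sumr -rmorph_sum sum1 rmorph1 mulr1.
have inB : forall r b u, dualf r -> B' (tA r (i b) u).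
  by move=> r b u d; apply: sub_gen_in; exists r, b, u.
have D'B : forall r u, dualf r -> D' (tA r 1 u) = 0.
  by move=> r u d; rewrite -(rmorph1 i); apply: D'0; apply: inB.
have Lpsi : forall j k s v w, dualf s ->
    lS (tA s 1 (uu j)) (rS w (tA (rho k) 1 v)) = tS s (psi j k w) v.
  move=> j k s v w d; move: w.
  apply: (tens_eq HtS (h1 := fun w => lS (tA s 1 (uu j)) (rS w (tA (rho k) 1 v)))
                      (h2 := fun w => tS s (psi j k w) v)).
  - by move=> w1 w2 /=; rewrite rS1 lS2.
  - by move=> w1 w2 /=; rewrite psiA tSx.
  - move=> t s' t' dt /=.
    by rewrite (HrSE _ _ _ _ _ _ dt (drho k)) (HlSE _ _ _ _ _ _ d dt) psiE // mulr1 mul1r.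
have key : forall s x v, dualf s -> D' (tA s x v) = tS s (D x) v.
  move=> s x v d.
  have step : forall j, D' (mulA (tA s 1 (uu j)) (tA (rho j) x v)) =
      \sum_k tS s (psi j k (D' (tA (rho j) x (uu k)))) v.
    move=> j; rewrite D'M D'B // rS0 add0r.
    rewrite -{1}[x]mulr1 Lsplit ?drho // (addf_sum _ _ _ D'A) (addf_sum _ _ _ (lS2 _)).
    apply: eq_bigr => k _.
    by rewrite D'M (D'B _ _ (drho k)) lS0 addr0 Lpsi.
  rewrite -{1}[x]mul1r Lsplit // (addf_sum _ _ _ D'A) (eq_bigr _ (fun j _ => step j)).
  rewrite /D tS_sum //; apply: eq_bigr => j _; by rewrite tS_sum.
have HD : DerB D.
  split.
  - move=> x y; rewrite /D -big_split; apply: eq_bigr => j _.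
    rewrite -big_split; apply: eq_bigr => k _ /=.
    by rewrite tAx ?drho // D'A psiA.
  - move=> x y.
    have e : forall s v, dualf s -> D' (tA s (x * y) v) = tS s (sr (D x) y + sl x (D y)) v.
      move=> s v d; rewrite Lsplit // (addf_sum _ _ _ D'A).
      rewrite (eq_bigr (fun l => tS s (sr (D x) (i (rho l (uu l)) * y) +
                                        sl (x * i (rho l (uu l))) (D y)) v)); last first.
        move=> l _; rewrite D'M (key _ _ _ d) (key _ _ _ (drho l)).
        by rewrite (HrSE _ _ _ _ _ _ d (drho l)) (HlSE _ _ _ _ _ _ d (drho l)) tSx.
      rewrite -tS_sum // big_split /= -(addf_sum _ _ _ (srA (D x))) -sl_sumA.
      by rewrite -mulr_suml -mulr_sumr -rmorph_sum sum1 rmorph1 mul1r mulr1.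
    transitivity (\sum_j \sum_k psi j k (tS (rho j) (sr (D x) y + sl x (D y)) (uu k))).
      rewrite /D; apply: eq_bigr => j _; apply: eq_bigr => k _.
      by rewrite e.
    exact: contr.
  - move=> c [b ->]; rewrite /D big1 // => j _; rewrite big1 // => k _.
    by rewrite D'0 ?(addf0 (psiA j k)) //; apply: inB.
exists D; split => //.
have [PA PE] := PhiD D HD.
move=> z; move: z; apply: (tens_eq HtA (h1 := Phi D) (h2 := D')) => //.
by move=> s x v d; rewrite PE // key.
Qed.
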